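(* Let $G$ be a group, $f:G\to G$ an endomorphism, and $x_0\in G$ such that $f^2(x)=x_0^{-1}f(x)x_0$ for all $x\in G$. Put $x_i=f^i(x_0)$ for $i>0$. If there exist $k\ge1$ and $i\ge0$ with $x_i^k\in\mathrm{im}(f^{i+1})$, then there exist $n\ge1$, an endomorphism $g:G\to G$ with $g\circ g=g$, and $c\in G$ such that $g(x)=c\,f^n(x)\,c^{-1}$ for all $x\in G$ (i.e. some power of $f$ is conjugate to an idempotent endomorphism). *)

(* Defs.v *)
From mathcomp Require Import all_boot.
Set Implicit Arguments. Unset Strict Implicit. Unset Printing Implicit Defensive.

Definition is_group (G : Type) (mul : G -> G -> G) (one : G) (inv : G -> G) : Prop :=
  [/\ (forall x y z, mul x (mul y z) = mul (mul x y) z),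
      (forall x, mul one x = x),
      (forall x, mul x one = x),
      (forall x, mul (inv x) x = one)
    & (forall x, mul x (inv x) = one)].

Definition is_endo (G : Type) (mul : G -> G -> G) (f : G -> G) : Prop :=
  forall x y, f (mul x y) = mul (f x) (f y).

Definition gpow (G : Type) (mul : G -> G -> G) (one : G) (x : G) (k : nat) : G :=
  iter k (mul x) one.

(* Main.v *)
Require Import Defs.
From mathcomp Require Import all_boot.

Set Implicit Arguments.
Section Aux.
Variables (G : Type) (mul : G -> G -> G) (one : G) (inv : G -> G).
Hypothesis HG : is_group mul one inv.

Lemma mA x y z : mul x (mul y z) = mul (mul x y) z. Proof. by case: HG. Qed.
Lemma m1 x : mul one x = x. Proof. by case: HG. Qed.
Lemma m1r x : mul x one = x. Proof. by case: HG. Qed.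
Lemma mV x : mul (inv x) x = one. Proof. by case: HG. Qed.
Lemma mVr x : mul x (inv x) = one. Proof. by case: HG. Qed.

Lemma cancl a b c : mul a b = mul a c -> b = c.
Proof.
move=> H; have := congr1 (mul (inv a)) H.
by rewrite !mA mV !m1.
Qed.
Lemma cancr a b c : mul b a = mul c a -> b = c.
Proof.
move=> H; have := congr1 (fun t => mul t (inv a)) H.
by rewrite /= -!mA mVr !m1r.
Qed.
Lemma inv_uniq a b : mul a b = one -> a = inv b.
Proof. by move=> H; apply: (@cancr b); rewrite H mV. Qed.

Lemma gpowS x m : gpow mul one x m.+1 = mul x (gpow mul one x m).
Proof. by []. Qed.
Lemma gpowSr x m : gpow mul one x m.+1 = mul (gpow mul one x m) x.
Proof.
elim: m => [|m IH]; first by rewrite /gpow /= m1 m1r.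
by rewrite [LHS]gpowS [in LHS]IH mA -gpowS.
Qed.

Variable f : G -> G.
Hypothesis Hf : is_endo mul f.

Lemma f1 : f one = one.
Proof. apply: (@cancl (f one)); by rewrite -Hf !m1r. Qed.
Lemma fV x : f (inv x) = inv (f x).
Proof. apply: inv_uniq; by rewrite -Hf mV f1. Qed.
Lemma fpow x m : f (gpow mul one x m) = gpow mul one (f x) m.
Proof. elim: m => [|m IH]; first exact: f1. by rewrite !gpowS Hf IH. Qed.
Lemma iter_endo j : is_endo mul (iter j f).
Proof. elim: j => [|j IH] x y //=. by rewrite IH Hf. Qed.
Lemma iterpow j x m : iter j f (gpow mul one x m) = gpow mul one (iter j f x) m.
Proof. elim: j => [|j IH] //=. by rewrite IH fpow. Qed.

Variable x0 : G.
Hypothesis HA : forall x, f (f x) = mul (inv x0) (mul (f x) x0).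

Lemma finj a b : f (f a) = f (f b) -> f a = f b.
Proof. rewrite !HA => /cancl; exact: cancr. Qed.

Lemma finjit j a b : iter j.+1 f a = iter j.+1 f b -> f a = f b.
Proof.
elim: j => [|j IH] // H; apply: IH; exact: finj H.
Qed.

Lemma HB u : mul (f x0) (f (f (f u))) = mul (f (f u)) (f x0).
Proof.
have -> : f (f (f u)) = mul (inv (f x0)) (mul (f (f u)) (f x0)).
  by have := congr1 f (HA u); rewrite !Hf fV.
by rewrite mA mVr m1.
Qed.
Lemma HBm m u : mul (gpow mul one (f x0) m) (iter m f (f (f u)))
  = mul (f (f u)) (gpow mul one (f x0) m).
Proof.
have E v n : iter n f (f (f v)) = f (f (iter n f v)) by rewrite -!iterSr.
elim: m => [|m IH]; first by rewrite /= m1 m1r.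
by rewrite iterS E !gpowSr -mA HB mA -E IH mA.
Qed.
End Aux.

Theorem corollary3p6 (G : Type) (mul : G -> G -> G) (one : G) (inv : G -> G)
  (f : G -> G) (x0 : G) :
  is_group mul one inv ->
  is_endo mul f ->
  (forall x, f (f x) = mul (inv x0) (mul (f x) x0)) ->
  (exists (k i : nat), 1 <= k /\
     exists y, iter i.+1 f y = gpow mul one (iter i f x0) k) ->
  exists n : nat, 1 <= n /\
    exists g : G -> G, is_endo mul g /\ (forall x, g (g x) = g x) /\
      exists c : G, forall x, g x = mul c (mul (iter n f x) (inv c)).
Proof.
move=> HG Hf HA [k [i [Hk [y Hy]]]].
have Y : f (f y) = gpow mul one (f x0) k.
  have : iter i.+1 f (f y) = iter i.+1 f (gpow mul one x0 k).
    by rewrite -iterSr iterS Hy (fpow HG Hf) (iterpow HG Hf).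
  move/(finjit HG _ _ HA) => ->; by rewrite (fpow HG Hf).
have K1 : forall x, exists v, f (f x) = f (f (f v)).
  move=> x; exists (iter k.-1 f (mul y (mul x (inv y)))).
  set w := mul y (mul x (inv y)).
  have E2 : iter k f (f (f w)) = f (f (f (iter k.-1 f w))).
    by case: (k) Hk => // k' _; rewrite iterS -!iterSr.
  rewrite -E2; symmetry; apply: (@cancl _ _ _ _ HG (gpow mul one (f x0) k)).
  rewrite (HBm HG Hf _ HA) /w !Hf !(fV HG Hf) Y -!(mA HG) (mV HG) (m1r HG).
  done.
have K2 : forall x, exists v, f x = f (f v).
  move=> x; have [v Hv] := K1 x; exists v.
  move: Hv; rewrite (HA x) (HA (f v)) => /(cancl HG) /(cancr HG); done.
have K : forall x, mul (f x0) (f (f x)) = mul (f x) (f x0).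
  move=> x; have [v ->] := K2 x; exact: (HB HG Hf _ HA).
exists 1; split => //.
exists (fun x => mul x0 (mul (f x) (inv x0))); split.
  move=> a b /=; rewrite Hf !(mA HG).
  by rewrite -[mul (mul (mul x0 (f a)) (inv x0)) x0](mA HG) (mV HG) (m1r HG).
split.
  move=> x /=; rewrite !Hf (fV HG Hf); congr (mul x0 (mul _ (inv x0))).
  by rewrite (mA HG) K -(mA HG) (mVr HG) (m1r HG).
by exists x0.
Qed.
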